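(* For all $\epsilon>0$ and $k\in\mathbb{N}$, let $d=d(\epsilon)=40\epsilon^{-2}$ and $N=N(\epsilon,k)=32k\epsilon^{-2}$. Let $D$ be a digraph on at least $N$ vertices. Then there is a $(k,d)$-connected subset $A\subseteq V(D)$ with $|A|\geq\delta^+(D)-\epsilon|D|$.
   Context: Digraphs are finite, without loops and without multiple edges (an edge may appear in both directions). A path is a sequence of distinct vertices $x_1,\dots,x_t$ with each $x_ix_{i+1}$ a directed edge; its length is its number of edges. For an uncoloured digraph $D$, a set $A\subseteq V(D)$ is $(k,d)$-connected in $D$ if for every $S\subseteq V(D)$ with $|S|\leq k-1$ and all $x,y\in A\setminus S$ there is a path from $x$ to $y$ in $D$ of length at most $d$ containing no vertex of $S$. $\delta^+(D)$ is the minimum out-degree and $|D|$ the number of vertices. *)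

(* Defs.v *)
From HB Require Import structures.
From mathcomp Require Import all_boot all_order all_algebra.
Set Implicit Arguments. Unset Strict Implicit. Unset Printing Implicit Defensive.
Import Order.TTheory GRing.Theory Num.Theory.

(* A digraph is a vertex type T : finType with an edge relation e : rel T
   (e x y means the directed edge xy is present); loops are excluded by the
   hypothesis [irreflexive e] in the theorem. Both xy and yx may be edges. *)

Definition outdeg (T : finType) (e : rel T) (x : T) : nat := #|[set y | e x y]|.

(* minimum out-degree delta^+(D); for the empty digraph it is 0
   (the seed #|T| never exceeds the minimum when T is nonempty, since
   every out-degree is < #|T|). *)
Definition mindeg (T : finType) (e : rel T) : nat :=
  \big[minn/#|T|]_(x : T) outdeg e x.

(* p is (the tail of) a path x = x_1, x_2, ..., x_t = y of length size p
   with distinct vertices, avoiding S. *)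
Definition avoiding_path (T : finType) (e : rel T) (S : {set T}) (x y : T)
  (p : seq T) : bool :=
  [&& path e x p, last x p == y, uniq (x :: p) & all (fun v => v \notin S) (x :: p)].

Local Open Scope ring_scope.

Definition kd_connected (R : realFieldType) (T : finType) (e : rel T)
  (k : nat) (d : R) (A : {set T}) : Prop :=
  forall S : {set T}, (#|S| < k)%N ->
  forall x y : T, x \in A :\: S -> y \in A :\: S ->
  exists p : seq T, avoiding_path e S x y p /\ (size p)%:R <= d.

(* Main.v *)
Require Import Defs.
From HB Require Import structures.
From mathcomp Require Import all_boot all_order all_algebra.
From mathcomp Require Import ring lra.
Import Order.TTheory GRing.Theory Num.Theory.

Module Helpers.
Set Implicit Arguments. Unset Strict Implicit. Unset Printing Implicit Defensive.

Lemma mindeg_le (T : finType) (e : rel T) v : mindeg e <= outdeg e v.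
Proof.
rewrite /mindeg.
have := mem_index_enum v; rewrite unlock; elim: (index_enum T) => //= i l ih.
rewrite inE => /orP [/eqP-> | /ih h]; first by rewrite geq_minl.
by rewrite geq_min h orbT.
Qed.

Lemma mindeg_leT (T : finType) (e : rel T) : mindeg e <= #|T|.
Proof.
rewrite /mindeg unlock; elim: (index_enum T) => //= i l ih.
by rewrite geq_min ih orbT.
Qed.

Definition nbo (T : finType) (e : rel T) (X : {set T}) : {set T} :=
  [set w | [exists v in X, e v w]].
Definition bdry (T : finType) (e : rel T) (X : {set T}) := nbo e X :\: X.

Lemma bdry_split (T : finType) (e : rel T) (X C : {set T}) :
  X \subset C -> #|bdry e X| <= #|bdry e X :&: C| + #|bdry e C|.
Proof.
move=> XC; rewrite -(cardsID C (bdry e X)) leq_add2l.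
apply: subset_leq_card; apply/subsetP => w.
rewrite !inE => /andP [wC /andP [_ /existsP [v /andP [vX evw]]]].
rewrite wC /=; apply/existsP; exists v; rewrite evw andbT.
exact: (subsetP XC).
Qed.

Fixpoint reach (T : finType) (e : rel T) (S : {set T}) (x : T) (i : nat) : {set T} :=
  match i with
  | 0 => [set x] :\: S
  | i.+1 => reach e S x i :|: (nbo e (reach e S x i) :\: S)
  end.

Lemma shorten_ex (T : eqType) (e : rel T) x p : path e x p ->
  exists q, [/\ path e x q, uniq (x :: q), {subset q <= p} & last x q = last x p].
Proof. by case/shortenP => q *; exists q. Qed.

Lemma extend_path (T : finType) (e : rel T) S x v w p :
  avoiding_path e S x v p -> e v w -> w \notin S ->
  exists q, avoiding_path e S x w q /\ size q <= (size p).+1.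
Proof.
case/and4P => pp /eqP lp up ap evw wS.
have pr : path e x (rcons p w) by rewrite rcons_path pp lp evw.
have [q [qp uq sub]] := shorten_ex pr.
rewrite last_rcons => lq.
exists q; split.
  apply/and4P; split => //; first by rewrite lq.
  apply/allP => z; rewrite inE => /orP [/eqP -> | zq].
    by move: ap => /allP; apply; rewrite mem_head.
  have := sub z zq; rewrite mem_rcons inE => /orP [/eqP -> //| zp].
  by move: ap => /allP; apply; rewrite inE zp orbT.
rewrite -(size_rcons p w); apply: uniq_leq_size => //.
by case/andP: uq.
Qed.

Lemma reach_path (T : finType) (e : rel T) S x i w :
  w \in reach e S x i -> exists p, avoiding_path e S x w p /\ size p <= i.
Proof.
elim: i w => [|i IH] w /=.
  rewrite !inE => /andP [wS /eqP wx]; subst w; exists [::]; split => //.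
  by rewrite /avoiding_path /= eqxx wS.
rewrite !inE => /orP [/IH [p [ap sp]] | /andP [wS /existsP [v /andP [vr evw]]]].
  by exists p; split => //; apply: leq_trans sp _.
have [p [ap sp]] := IH v vr.
have [q [aq sq]] := extend_path ap evw wS.
by exists q; split => //; apply: leq_trans sq _.
Qed.

Lemma reach_mono (T : finType) (e : rel T) S x i : reach e S x i \subset reach e S x i.+1.
Proof. by rewrite /= subsetUl. Qed.

Local Open Scope nat_scope.

Lemma reach_x (T : finType) (e : rel T) (S : {set T}) x i : x \notin S -> x \in reach e S x i.
Proof.
move=> xS; elim: i => [|i IH] /=; first by rewrite !inE xS eqxx.
by rewrite inE IH.
Qed.

Lemma card_sub_diff (T : finType) (B S : {set T}) : (#|B| <= #|S| + #|B :\: S|)%N.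
Proof.
rewrite -(cardsID S B) leq_add2r; apply: subset_leq_card; exact: subsetIr.
Qed.

Local Open Scope ring_scope.

Lemma core (R : realFieldType) (T : finType) (e : rel T) (lam s : R) (k : nat)
  (C S : {set T}) (x y : T) (i0 : nat)
  (hlam : 0 < lam)
  (hexp : forall X : {set T}, X != set0 -> X \subset C ->
     #|C|%:R - #|X|%:R <= lam * #|bdry e X :&: C|%:R)
  (hS : (#|S| < k)%N) (xC : x \in C) (xS : x \notin S) (yS : y \notin S)
  (hy : s + k%:R <= #|[set v in C | e v y]|%:R)
  (hi0 : #|T|%:R < i0%:R * (s / lam - k%:R)) :
  exists p, avoiding_path e S x y p /\ (size p <= i0.+1)%N.
Proof.
set g := s / lam - k%:R.
have hSk : (#|S|%:R : R) + 1 <= k%:R by rewrite natr1 ler_nat.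
have claim : forall i, (#|C :\: reach e S x i|%:R < s) \/
                       (i%:R * g <= #|reach e S x i :&: C|%:R).
  elim => [|i IH]; first by right; rewrite mul0r ler0n.
  have [lt|ge] := ltrP (#|C :\: reach e S x i|%:R) s.
    left; apply: le_lt_trans lt; rewrite ler_nat; apply: subset_leq_card.
    by apply: setDS; apply: reach_mono.
  case: IH => [lt|IH]; first by move: ge; rewrite leNgt lt.
  right.
  set X := reach e S x i :&: C.
  set Y := reach e S x i.+1 :&: C.
  have XC : X \subset C by apply: subsetIr.
  have Xn0 : X != set0 by apply/set0Pn; exists x; rewrite inE reach_x.
  have h1 := hexp X Xn0 XC.
  have CX : #|C|%:R - #|X|%:R = (#|C :\: reach e S x i|%:R : R).
    have -> : C :\: reach e S x i = C :\: X.
      by apply/setP => z; rewrite !inE; case: (z \in C); rewrite ?andbT ?andbF.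
    by rewrite cardsD (setIidPr XC) natrB // subset_leq_card.
  set b := #|bdry e X :&: C|.
  have hb : s / lam <= b%:R.
    rewrite ler_pdivrMr // mulrC; apply: le_trans h1; by rewrite CX.
  have XY : X \subset Y by apply: setSI; apply: reach_mono.
  have inc : (bdry e X :&: C) :\: S \subset Y :\: X.
    apply/subsetP => z; rewrite !inE => /andP [zS /andP [/andP [zX zn] zC]].
    rewrite zX zC /= andbT.
    apply/orP; right; rewrite zS /=.
    move: zn => /existsP [v /andP [vX evz]].
    apply/existsP; exists v; rewrite evz andbT; move: vX; rewrite /X inE.
    by case/andP.
  have n1 : (b <= #|S| + #|Y :\: X|)%N.
    apply: leq_trans (card_sub_diff _ S) _; rewrite leq_add2l.
    exact: subset_leq_card.
  have n2 : #|Y| = (#|X| + #|Y :\: X|)%N.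
    by rewrite cardsD (setIidPr XY) subnKC // subset_leq_card.
  have r1 : (b%:R : R) <= #|S|%:R + #|Y :\: X|%:R by rewrite -natrD ler_nat.
  rewrite n2 natrD mulrSr.
  rewrite /g in IH *; lra.
have [lt|ge] := claim i0; last first.
  have : (#|reach e S x i0 :&: C|%:R : R) <= #|T|%:R by rewrite ler_nat max_card.
  rewrite /g in ge; lra.
set Q := [set v in C | e v y] :\: S.
have hQ : s < #|Q|%:R.
  have := card_sub_diff [set v in C | e v y] S.
  rewrite -(ler_nat R) natrD; lra.
have : Q :&: reach e S x i0 != set0.
  apply/negP => /eqP Q0.
  have : Q \subset C :\: reach e S x i0.
    apply/subsetP => z zQ; rewrite inE.
    have : z \notin Q :&: reach e S x i0 by rewrite Q0 inE.
    rewrite inE zQ /= => -> /=; move: zQ; rewrite !inE; by case/andP => _ /andP [].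
  move/subset_leq_card; rewrite -(ler_nat R); lra.
case/set0Pn => u; rewrite inE => /andP [uQ ur].
have [p [ap sp]] := reach_path ur.
have euy : e u y by move: uQ; rewrite !inE => /andP [_ /andP []].
have [q [aq sq]] := extend_path ap euy yS.
by exists q; split => //; apply: leq_trans sq _.
Qed.

Local Close Scope ring_scope.

Lemma card_cond (T : finType) (C : {set T}) (P : pred T) :
  #|[set w in C | P w]| = (\sum_(w in C) P w)%N.
Proof.
rewrite -sum1_card big_mkcond /= [RHS]big_mkcond /=.
by apply: eq_bigr => w _; rewrite inE; case: (w \in C); case: (P w).
Qed.

Lemma dcount (T : finType) (e : rel T) (C : {set T}) :
  (\sum_(v in C) #|[set w in C | e v w]|)%N = (\sum_(y in C) #|[set v in C | e v y]|)%N.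
Proof.
under eq_bigr do rewrite card_cond.
under [RHS]eq_bigr do rewrite card_cond.
exact: exchange_big.
Qed.

Local Open Scope ring_scope.

Lemma argmin_ex (R : realFieldType) (T : finType) (F : {set T} -> R) (X0 : {set T}) :
  X0 != set0 -> exists C, C != set0 /\ forall X, X != set0 -> F C <= F X.
Proof.
move=> X0n.
case: (@arg_minP _ R _ X0 (fun X => X != set0) F X0n) => C Cn hC.
by exists C; split => // X /hC.
Qed.

Lemma A_size (R : realFieldType) (T : finType) (e : rel T) (C : {set T}) (delta b : nat) (t : R) :
  C != set0 -> (forall v, v \in C -> delta <= #|[set w in C | e v w]| + b)%N -> 0 <= t ->
  delta%:R - b%:R - t <= #|[set y in C | t <= #|[set v in C | e v y]|%:R]|%:R.
Proof.
move=> Cn hout t0.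
set A := [set y in C | _].
have AC : A \subset C by apply/subsetP => y; rewrite inE => /andP [].
have n1 : (#|C| * delta <= \sum_(v in C) #|[set w in C | e v w]| + #|C| * b)%N.
  rewrite -!sum_nat_const -big_split /=; exact: leq_sum.
rewrite dcount in n1.
have r1 : (\sum_(y in C) (#|[set v in C | e v y]|%:R : R)) <=
          \sum_(y in C) (((y \in A)%:R * #|C|%:R) + t).
  apply: ler_sum => y yC.
  case yA: (y \in A).
    rewrite mul1r; have : (#|[set v in C | e v y]| <= #|C|)%N.
      by apply: subset_leq_card; apply/subsetP => v; rewrite inE => /andP [].
    rewrite -(ler_nat R); lra.
  move: yA; rewrite inE yC /= => /negbT; rewrite -ltNge mul0r add0r => h.
  exact: ltW.
rewrite big_split /= -mulr_suml sumr_const in r1.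
have sA : \sum_(y in C) ((y \in A)%:R : R) = #|A|%:R.
  rewrite -natr_sum; congr (_%:R).
  rewrite -sum1_card big_mkcond /= [RHS]big_mkcond /=.
  apply: eq_bigr => y _; case yA: (y \in A); first by rewrite (subsetP AC).
  by case: (y \in C).
rewrite sA -natr_sum in r1.
have r2 : (#|C|%:R * delta%:R : R) <= #|C|%:R * (#|A|%:R + t) + #|C|%:R * b%:R.
  have := n1; rewrite -(ler_nat R) natrD !natrM => h.
  apply: le_trans h _; rewrite lerD2r mulrDr.
  move: r1; rewrite mulrC -mulr_natr; lra.
have Cp : (0 : R) < #|C|%:R by rewrite ltr0n card_gt0.
have : #|C|%:R * (delta%:R - b%:R - t) <= #|C|%:R * (#|A|%:R : R).
  rewrite !mulrDr !mulrN; lra.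
by rewrite ler_pM2l.
Qed.

End Helpers.
Import Helpers.

Local Open Scope ring_scope.

Theorem mainTheorem6 (R : realFieldType) (eps : R) (k : nat) (heps : 0 < eps)
  (T : finType) (e : rel T) (hloop : irreflexive e)
  (hN : 32 * k%:R / eps ^+ 2 <= #|T|%:R) :
  exists A : {set T},
    kd_connected e k (40 / eps ^+ 2) A /\
    (mindeg e)%:R - eps * #|T|%:R <= #|A|%:R.
Proof.
set n := #|T|.
have n0 : (0 : R) <= n%:R by rewrite ler0n.
have epsn0 : 0 <= eps * n%:R by rewrite mulr_ge0 // ltW.
have [small|big] := lerP ((mindeg e)%:R) (eps * n%:R).
  exists set0; split.
    by move=> S _ x y; rewrite !inE andbF.
  rewrite cards0; lra.
case k0 : k => [|k'].
  exists setT; split; first by move=> S; rewrite ltn0.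
  rewrite cardsT; have := mindeg_leT e; rewrite -(ler_nat R) -/n; lra.
rewrite -k0.
have kpos : (1 <= k)%N by rewrite k0.
have dn : ((mindeg e)%:R : R) <= n%:R by rewrite ler_nat mindeg_leT.
have npos : (0 : R) < n%:R by lra.
have eps1 : eps < 1.
  have : eps * n%:R < 1 * n%:R by lra.
  by rewrite ltr_pM2r.
set t := eps ^+ 2.
have tpos : 0 < t by rewrite exprn_gt0.
have t1 : t < 1 by rewrite /t expr2; nra.
have hk : 32 * k%:R <= n%:R * t by rewrite -ler_pdivrMr.
have hk1 : (1 : R) <= k%:R by rewrite ler1n.
set lam := 4 / eps.
have lampos : 0 < lam by rewrite divr_gt0.
set s := eps * n%:R / 2.
pose Phi := fun X : {set T} => (#|X|%:R : R) + lam * #|bdry e X|%:R.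
have Tn0 : [set: T] != set0 by rewrite -card_gt0 cardsT -(ltr0n R).
have [C [Cn hC]] := argmin_ex Phi Tn0.
have hexp : forall X : {set T}, X != set0 -> X \subset C ->
     #|C|%:R - #|X|%:R <= lam * #|bdry e X :&: C|%:R.
  move=> X Xn XC; have := hC X Xn; rewrite /Phi.
  have := bdry_split e XC; rewrite -(ler_nat R) natrD => h1 h2.
  have h3 := ler_pM2l lampos; move: h1; rewrite -h3 => h1; lra.
have hbC : lam * #|bdry e C|%:R <= n%:R.
  have := hC _ Tn0; rewrite /Phi.
  have -> : bdry e [set: T] = set0 by apply/setP => z; rewrite /bdry !inE.
  rewrite cards0 mulr0 addr0 cardsT -/n => h; move: (ler0n R #|C|); lra.
have hbC' : (#|bdry e C|%:R : R) <= eps * n%:R / 4.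
  move: hbC; rewrite /lam mulrC mulrA ler_pdivrMr // => h.
  rewrite ler_pdivlMr //; lra.
have hout : forall v, v \in C ->
    (mindeg e <= #|[set w in C | e v w]| + #|bdry e C|)%N.
  move=> v vC; apply: leq_trans (mindeg_le e v) _.
  apply: leq_trans (leq_card_setU _ _).
  apply: subset_leq_card; apply/subsetP => w; rewrite !inE => evw.
  case wC: (w \in C); first by rewrite evw.
  rewrite /=; apply/existsP; exists v; by rewrite vC evw.
exists [set y in C | s + k%:R <= #|[set v in C | e v y]|%:R]; split; last first.
  have t0 : 0 <= s + k%:R by rewrite /s; lra.
  have := A_size Cn hout t0.
  have : k%:R <= eps * n%:R / 32.
    have : n%:R * t <= n%:R * eps by rewrite /t expr2 ler_pM2l // ?mulrC; nra.
    lra.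
  rewrite /s; lra.
move=> S hS x y.
rewrite !inE => /andP [xS /andP [xC _]] /andP [yS /andP [yC hy]].
pose P := fun i : nat => (i.+1%:R <= 40 / t).
have P0 : exists i, P i.
  by exists 0%N; rewrite /P ler_pdivlMr // mul1r; lra.
have Pb : forall i, P i -> (i <= 2 * n)%N.
  move=> i; rewrite /P ler_pdivlMr // => h.
  have h2 : (32 : R) * i.+1%:R <= 40 * n%:R.
    have ia : (0:R) <= i.+1%:R by rewrite ler0n.
    have c1 : (0:R) <= i.+1%:R * (n%:R * t - 32 * k%:R) by apply: mulr_ge0 => //; lra.
    have c2 : (0:R) <= n%:R * (40 - i.+1%:R * t) by apply: mulr_ge0 => //; lra.
    have c3 : (0:R) <= i.+1%:R * (k%:R - 1) by apply: mulr_ge0 => //; lra.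
    nra.
  have : ((32 * i.+1)%N%:R : R) <= (40 * n)%N%:R by rewrite !natrM.
  rewrite ler_nat => h3.
  have h4 : (32 * i.+1 <= 32 * (2 * n))%N.
    by apply: leq_trans h3 _; rewrite mulnA; apply: leq_mul.
  by rewrite leq_pmul2l // in h4; apply: ltnW.
case: (ex_maxnP P0 Pb) => i0 Pi0 maxi0.
have nP : ~~ P i0.+1 by apply/negP => /maxi0; rewrite ltnn.
move: nP; rewrite /P -ltNge ltr_pdivrMr // => nP.
have hsl : s / lam = t * n%:R / 8.
  rewrite /s /lam /t; field; apply/eqP; lra.
have hi0 : n%:R < i0%:R * (s / lam - k%:R).
  rewrite hsl.
  have i0n : (0:R) <= i0%:R by rewrite ler0n.
  have g1 : 0 <= t * n%:R / 8 - k%:R - 3 * t * n%:R / 32 by lra.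
  have a1 := mulr_ge0 i0n g1.
  have a2 : (0 : R) <= (i0%:R * t - 38) * n%:R.
    apply: mulr_ge0 => //; move: nP; rewrite -[i0.+2]addn2 natrD mulrDl; lra.
  nra.
have [p [ap sp]] := core lampos hexp hS xC xS yS hy hi0.
exists p; split => //.
apply: le_trans Pi0; by rewrite ler_nat.
Qed.
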